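(* Let $\bar Q$ be a locally gentle bound quiver. There is an integer $N$ (depending only on $\bar Q$) such that every finite face of the non-kissing complex $\mathcal K_{nk}(\bar Q)$ has at most $N$ elements.
   Context: Locally gentle bound quiver $\bar Q=(Q,I)$: $Q$ finite, $I$ an ideal of $kQ$ generated by paths of length two ($kQ/I$ possibly infinite-dimensional), each vertex with at most two incoming and two outgoing arrows, and for each arrow $\beta$ at most one $\alpha$ with $t(\alpha)=s(\beta)$, $\alpha\beta\notin I$, at most one with $\alpha\beta\in I$, and symmetrically on the outgoing side. $\bar Q^{\mathrm{bl}}$ adds degree-one blossom vertices and arrows so each vertex of $Q_0$ has two incoming and two outgoing arrows, relations completed to stay locally gentle. A walk is a maximal (finite, or eventually cyclic ${}^\infty(c_1^{\varepsilon_1})\sigma(c_2^{\varepsilon_2})^\infty$ with $c_i$ oriented cycles, possibly trivial) string of $\bar Q^{\mathrm{bl}}$, a string being a composable reduced word in arrows and formal inverses with no factor $\pi^{\pm1}$ for a path $\pi\in I$; $\omega\equiv\omega^{-1}$. A substring $\prod_{i'<\ell<j'}\alpha_\ell^{\varepsilon_\ell}$ of $\omega=\prod_{i<\ell<j}\alpha_\ell^{\varepsilon_\ell}$ ($i\le i'<j'\le j$, strict at finite ends, with position) is on top if ($i'=-\infty$ or $\varepsilon_{i'}=-1$) and ($j'=\infty$ or $\varepsilon_{j'}=1$), at the bottom if ($i'=-\infty$ or $\varepsilon_{i'}=1$) and ($j'=\infty$ or $\varepsilon_{j'}=-1$). $\omega$ kisses $\omega'$ if a finite string is a top substring of $\omega$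 and a bottom substring of $\omega'$. Faces of $\mathcal K_{nk}(\bar Q)$ are sets of pairwise non-kissing walks (none kissing itself). *)

(* Defs.v *)
From Stdlib Require Import ZArith.
From mathcomp Require Import all_boot.
Set Implicit Arguments. Unset Strict Implicit. Unset Printing Implicit Defensive.

(* A bound quiver with relations of length two: vertices V, arrows A,
   source s, target t, and r a b <-> the length-two path "a then b" lies in I
   (I is the ideal generated by these paths). *)

Section Quiver.
Variables (V A : finType) (s t : A -> V) (r : rel A).

Definition locally_gentle : Prop :=
  (forall a b, r a b -> t a = s b) /\
  (forall v, #|[set a | t a == v]| <= 2 /\ #|[set a | s a == v]| <= 2) /\
  (forall b a1 a2, t a1 = s b -> t a2 = s b -> ~~ r a1 b -> ~~ r a2 b -> a1 = a2) /\
  (forall b a1 a2, r a1 b -> r a2 b -> a1 = a2) /\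
  (forall a b1 b2, s b1 = t a -> s b2 = t a -> ~~ r a b1 -> ~~ r a b2 -> b1 = b2) /\
  (forall a b1 b2, r a b1 -> r a b2 -> b1 = b2).

End Quiver.

Definition is_blossoming (V A : finType) (s t : A -> V) (r : rel A)
    (V' A' : finType) (s' t' : A' -> V') (r' : rel A')
    (iv : V -> V') (ia : A -> A') : Prop :=
  injective iv /\ injective ia /\
  (forall a, s' (ia a) = iv (s a) /\ t' (ia a) = iv (t a)) /\
  (forall a b, r' (ia a) (ia b) = r a b) /\
  locally_gentle s' t' r' /\
  (forall v, #|[set a | t' a == iv v]| = 2 /\ #|[set a | s' a == iv v]| = 2) /\
  (forall w, w \notin codom iv ->
     #|[set a | t' a == w]| + #|[set a | s' a == w]| = 1) /\
  (forall a, a \notin codom ia -> (s' a \in codom iv) != (t' a \in codom iv)).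

(* Words: letters are (arrow, true) for a direct arrow and (arrow, false) for a
   formal inverse.  A word  prod_{lo < p < hi} lf p  with lo, hi in Z u {-oo,+oo}
   (None = infinite end). *)
Record word (A : Type) := Word { lo : option Z; hi : option Z; lf : Z -> A * bool }.

Definition inrange (A : Type) (w : word A) (p : Z) : Prop :=
  match lo w with None => True | Some l => (l < p)%Z end /\
  match hi w with None => True | Some h => (p < h)%Z end.

Section Strings.
Variables (V A : finType) (s t : A -> V) (r : rel A).

Definition lsrc (l : A * bool) : V := if l.2 then s l.1 else t l.1.
Definition ltgt (l : A * bool) : V := if l.2 then t l.1 else s l.1.

(* l1 l2 may be consecutive letters of a string: composable, reduced, and not
   a factor pi or pi^{-1} with pi a path in I. *)
Definition consec_ok (l1 l2 : A * bool) : Prop :=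
  ltgt l1 = lsrc l2 /\
  ~ (l1.1 = l2.1 /\ l1.2 <> l2.2) /\
  ~ (l1.2 && l2.2 && r l1.1 l2.1) /\
  ~ (~~ l1.2 && ~~ l2.2 && r l2.1 l1.1).

Definition is_string (w : word A) : Prop :=
  (exists p, inrange w p) /\
  forall p, inrange w p -> inrange w (p + 1) -> consec_ok (lf w p) (lf w (p + 1)).

Definition is_maximal (w : word A) : Prop :=
  (forall h, hi w = Some h -> forall l, ~ consec_ok (lf w (h - 1)) l) /\
  (forall l0, lo w = Some l0 -> forall l, ~ consec_ok l (lf w (l0 + 1))).

(* infinite ends are of the form c^eps repeated forever (c an oriented cycle) *)
Definition ends_cyclic (w : word A) : Prop :=
  (hi w = None -> exists (K p : Z) (eps : bool), (0 < p)%Z /\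
     forall i, (K <= i)%Z -> lf w (i + p) = lf w i /\ (lf w i).2 = eps) /\
  (lo w = None -> exists (K p : Z) (eps : bool), (0 < p)%Z /\
     forall i, (i <= K)%Z -> lf w (i - p) = lf w i /\ (lf w i).2 = eps).

Definition is_walk (w : word A) : Prop :=
  is_string w /\ is_maximal w /\ ends_cyclic w.

End Strings.

Definition rev_word (A : Type) (w : word A) : word A :=
  Word (option_map Z.opp (hi w)) (option_map Z.opp (lo w))
       (fun p => ((lf w (- p)).1, ~~ (lf w (- p)).2)).

Definition shift_word (A : Type) (w : word A) (k : Z) : word A :=
  Word (option_map (Z.add k) (lo w)) (option_map (Z.add k) (hi w))
       (fun p => lf w (p - k)).

Definition same_word (A : Type) (w w' : word A) : Prop :=
  lo w = lo w' /\ hi w = hi w' /\ forall p, inrange w p -> lf w p = lf w' p.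

(* omega == omega^{-1}, and words are considered up to shifting positions *)
Definition walk_equiv (A : Type) (w w' : word A) : Prop :=
  exists k, same_word (shift_word w k) w' \/ same_word (shift_word (rev_word w) k) w'.

(* Some finite string (substring at positions p < ... < p+n of w, resp.
   q < ... < q+n of w') is on top of w and at the bottom of w'. *)
Definition kiss0 (V A : finType) (s t : A -> V) (w w' : word A) : Prop :=
  exists (p q : Z) (n : nat), (0 < n)%N /\
    inrange w p /\ inrange w (p + Z.of_nat n) /\
    inrange w' q /\ inrange w' (q + Z.of_nat n) /\
    (lf w p).2 = false /\ (lf w (p + Z.of_nat n)).2 = true /\
    (lf w' q).2 = true /\ (lf w' (q + Z.of_nat n)).2 = false /\
    ltgt s t (lf w p) = ltgt s t (lf w' q) /\
    (forall m : nat, (0 < m < n)%N ->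
       lf w (p + Z.of_nat m) = lf w' (q + Z.of_nat m)).

Definition kisses (V A : finType) (s t : A -> V) (w w' : word A) : Prop :=
  kiss0 s t w w' \/ kiss0 s t w (rev_word w').

(* Main.v *)
Require Import Defs.
From Stdlib Require Import ZArith Lia Classical ClassicalEpsilon FunctionalExtensionality.
From mathcomp Require Import all_boot.
From mathcomp Require Import zify.
Set Implicit Arguments. Unset Strict Implicit. Unset Printing Implicit Defensive.


Lemma three_le2 (T : finType) (P : {pred T}) (a b c : T) :
  a \in P -> b \in P -> c \in P -> a != b -> a != c -> b != c -> (#|P| <= 2)%N -> False.
Proof.
move=> Ha Hb Hc ab ac bc H.
have sub : [set a; b; c] \subset P.
  by apply/subsetP => x; rewrite !inE => /orP [/orP [] | ] /eqP ->.
have := subset_leq_card sub.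
rewrite -setUA cardsU1 cards2 !inE bc negb_or ab ac /=.
by move=> /leq_trans /(_ H).
Qed.

Section Local.
Variables (V A : finType) (s t : A -> V) (r : rel A).
Hypothesis LG : locally_gentle s t r.

Definition inv (l : A * bool) : A * bool := (l.1, ~~ l.2).

Lemma consec_inv l1 l2 : consec_ok s t r l1 l2 -> consec_ok s t r (inv l2) (inv l1).
Proof.
case: l1 => a d; case: l2 => b e; rewrite /consec_ok /inv /ltgt /lsrc /=.
case: d; case: e => /=; move=> [H1 [H2 [H3 H4]]]; (split; [|split; [|split]]) => //;
  try (by move=> [E1 E2]; apply: H2; split => //; auto); by rewrite ?andbT /=.
Qed.

Lemma invK l : inv (inv l) = l.
Proof. by case: l => a d; rewrite /inv /= negbK. Qed.

Lemma det_right l l1 l2 : consec_ok s t r l l1 -> consec_ok s t r l l2 ->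
  l1.2 = l2.2 -> l1 = l2.
Proof.
case: LG => _ [Hdeg [H3 [_ [H5 _]]]].
case: l => a d; case: l1 => b1 e1; case: l2 => b2 e2 /=.
rewrite /consec_ok /ltgt /lsrc /=.
move=> [E1 [R1 [S1 T1]]] [E2 [R2 [S2 T2]]] Ee; subst e2.
have [dgt dgs] := Hdeg (if d then t a else s a).
case: (eqVneq b1 b2) => [->//|nb]; exfalso.
case: e1 d E1 R1 S1 T1 E2 R2 S2 T2 dgt dgs => -[] /= E1 R1 S1 T1 E2 R2 S2 T2 dgt dgs.
- move/eqP: nb; apply; apply: (H5 a); [by rewrite E1 | by rewrite E2 | |].
  + by apply/negP => H; apply: S1.
  + by apply/negP => H; apply: S2.
- apply: (three_le2 (P := [set x | s x == s a]) (a := a) (b := b1) (c := b2) _ _ _ _ _ nb dgs).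
  + by rewrite inE.
  + by rewrite inE E1.
  + by rewrite inE E2.
  + by apply/eqP => E; apply: R1; subst.
  + by apply/eqP => E; apply: R2; subst.
- apply: (three_le2 (P := [set x | t x == t a]) (a := a) (b := b1) (c := b2) _ _ _ _ _ nb dgt).
  + by rewrite inE.
  + by rewrite inE E1.
  + by rewrite inE E2.
  + by apply/eqP => E; apply: R1; subst.
  + by apply/eqP => E; apply: R2; subst.
- move/eqP: nb; apply; apply: (H3 a); [by rewrite E1 | by rewrite E2 | |].
  + by apply/negP => H; apply: T1.
  + by apply/negP => H; apply: T2.
Qed.

Lemma det_left l l1 l2 : consec_ok s t r l1 l -> consec_ok s t r l2 l ->
  l1.2 = l2.2 -> l1 = l2.
Proof.
move=> /consec_inv H1 /consec_inv H2 E.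
have E' : inv l1 = inv l2.
  apply: (det_right H1 H2); by rewrite /inv /= E.
by rewrite -(invK l1) E' invK.
Qed.

End Local.



Section Words.
Variables (V A : finType) (s t : A -> V) (r : rel A).
Hypothesis LG : locally_gentle s t r.
Local Open Scope Z_scope.

Definition good (X : word A) : Prop :=
  (forall p, inrange X p -> inrange X (p+1) -> consec_ok s t r (lf X p) (lf X (p+1))) /\
  (forall h, hi X = Some h -> forall l, ~ consec_ok s t r (lf X (h-1)) l) /\
  (forall l0, lo X = Some l0 -> forall l, ~ consec_ok s t r l (lf X (l0+1))).

Lemma inrange_conv (X : word A) a b c : inrange X a -> inrange X b -> a <= c <= b -> inrange X c.
Proof.
rewrite /inrange; case: (lo X) => [l|]; case: (hi X) => [h|] /=; intuition lia.
Qed.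

Lemma sync_r (X Y : word A) a c : good X -> good Y -> inrange X a -> inrange Y c ->
  lf X a = lf Y c -> inrange X (a+1) -> inrange Y (c+1).
Proof.
move=> [GX _] [_ [GY _]] Ha Hc E Ha1.
have Hcons := GX a Ha Ha1. rewrite E in Hcons.
move: Hc GY; rewrite /inrange; case: (lo Y) => [l|]; case: (hi Y) => [h|] /= [H1 H2] GY;
  try (intuition lia);
  (case: (Z_lt_le_dec (c+1) h) => Hh; [intuition lia|]);
  (have Eh : h = c + 1 by lia);
  (exfalso; apply: (GY h erefl _ ); subst h; rewrite Z.add_simpl_r; exact: Hcons).
Qed.

Lemma sync_l (X Y : word A) a c : good X -> good Y -> inrange X a -> inrange Y c ->
  lf X a = lf Y c -> inrange X (a-1) -> inrange Y (c-1).
Proof.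
move=> [GX _] [_ [_ GY]] Ha Hc E Ha1.
have Hcons := GX (a-1) Ha1; rewrite Z.sub_add in Hcons; have {}Hcons := Hcons Ha.
rewrite E in Hcons.
move: Hc GY; rewrite /inrange; case: (lo Y) => [l|]; case: (hi Y) => [h|] /= [H1 H2] GY;
  try (intuition lia);
  (case: (Z_lt_le_dec l (c-1)) => Hh; [intuition lia|]);
  (have Eh : l = c - 1 by lia);
  (exfalso; apply: (GY l erefl _ ); subst l; rewrite Z.sub_add; exact: Hcons).
Qed.

Lemma inrange_rev (X : word A) p : inrange (rev_word X) p <-> inrange X (-p).
Proof.
rewrite /inrange /rev_word /=; case: (lo X) => [l|]; case: (hi X) => [h|] /=; lia.
Qed.

Lemma lf_rev (X : word A) p : lf (rev_word X) p = inv (lf X (-p)).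
Proof. by []. Qed.

Lemma rev_rev (X : word A) : rev_word (rev_word X) = X.
Proof.
case: X => l h f; rewrite /rev_word /=; congr Word.
- by case: l => //= x; rewrite Z.opp_involutive.
- by case: h => //= x; rewrite Z.opp_involutive.
- apply: functional_extensionality => p; rewrite Z.opp_involutive negbK.
  by case: (f p).
Qed.

Lemma good_rev (X : word A) : good X -> good (rev_word X).
Proof.
move=> [G1 [G2 G3]]; split; [|split].
- move=> p /inrange_rev H1 /inrange_rev H2; rewrite !lf_rev.
  apply: consec_inv.
  have E : - (p+1) + 1 = - p by lia.
  have := G1 (-(p+1)) H2; rewrite E; exact.
- move=> h Hh l Hc.
  have E : lo X = Some (-h).
    by move: Hh => /=; case: (lo X) => //= x [<-]; rewrite Z.opp_involutive.
  apply: (G3 (-h) E (inv l)); rewrite lf_rev in Hc.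
  have -> : - h + 1 = - (h - 1) by lia.
  by rewrite -(invK (lf X _)); apply: consec_inv.
- move=> l0 Hl l Hc.
  have E : hi X = Some (-l0).
    by move: Hl => /=; case: (hi X) => //= x [<-]; rewrite Z.opp_involutive.
  apply: (G2 (-l0) E (inv l)); rewrite lf_rev in Hc.
  have -> : - l0 - 1 = - (l0 + 1) by lia.
  by rewrite -(invK (lf X _)); apply: consec_inv.
Qed.

Lemma ltgt_inv l : ltgt s t (inv l) = lsrc s t l.
Proof. by case: l => a []. Qed.

Lemma lsrc_inv l : lsrc s t (inv l) = ltgt s t l.
Proof. by case: l => a []. Qed.

Lemma odiff_r (X Y : word A) a c : good X -> good Y ->
  inrange X a -> inrange X (a+1) -> inrange Y c -> inrange Y (c+1) ->
  lf X a = lf Y c -> lf X (a+1) <> lf Y (c+1) -> (lf X (a+1)).2 <> (lf Y (c+1)).2.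
Proof.
move=> [GX _] [GY _] H1 H2 H3 H4 E D O; apply: D.
apply: (det_right LG _ _ O); first exact: GX. rewrite E; exact: GY.
Qed.

Lemma odiff_l (X Y : word A) a c : good X -> good Y ->
  inrange X a -> inrange X (a-1) -> inrange Y c -> inrange Y (c-1) ->
  lf X a = lf Y c -> lf X (a-1) <> lf Y (c-1) -> (lf X (a-1)).2 <> (lf Y (c-1)).2.
Proof.
move=> [GX _] [GY _] H1 H2 H3 H4 E D O; apply: D.
apply: (det_left LG _ _ O).
- have := GX (a-1) H2; rewrite Z.sub_add; apply; exact: H1.
- have := GY (c-1) H4; rewrite Z.sub_add -E; apply; exact: H3.
Qed.

Lemma GK (X Y : word A) p q n c : 0 < n ->
  inrange X p -> inrange X (p+n) -> inrange Y q -> inrange Y (q+n) ->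
  (lf X p).2 = c -> (lf X (p+n)).2 = ~~ c -> (lf Y q).2 = ~~ c -> (lf Y (q+n)).2 = c ->
  ltgt s t (lf X p) = ltgt s t (lf Y q) ->
  (forall m, 0 < m < n -> lf X (p+m) = lf Y (q+m)) ->
  kiss0 s t X Y \/ kiss0 s t Y X.
Proof.
move=> Hn H1 H2 H3 H4 O1 O2 O3 O4 Et Hi.
have En : Z.of_nat (Z.to_nat n) = n by lia.
case: c O1 O2 O3 O4 => O1 O2 O3 O4.
- right; exists q, p, (Z.to_nat n); rewrite En; split; first by apply/ltP; lia.
  do 10?split => //.
  move=> m /andP [/ltP m1 /ltP m2]; symmetry; apply: Hi; lia.
- left; exists p, q, (Z.to_nat n); rewrite En; split; first by apply/ltP; lia.
  do 10?split => //.
  move=> m /andP [/ltP m1 /ltP m2]; apply: Hi; lia.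
Qed.

Lemma kiss_rev (X Y : word A) : good X -> good Y ->
  kiss0 s t X Y -> kiss0 s t (rev_word X) (rev_word Y).
Proof.
move=> [GX _] [GY _] [p [q [n [Hn [H1 [H2 [H3 [H4 [O1 [O2 [O3 [O4 [Et Hi]]]]]]]]]]]]].
move/ltP: Hn => Hn.
exists (- (p + Z.of_nat n)), (- (q + Z.of_nat n)), n; split; first by apply/ltP.
have E1 : - (p + Z.of_nat n) + Z.of_nat n = - p by lia.
have E2 : - (q + Z.of_nat n) + Z.of_nat n = - q by lia.
rewrite E1 E2 !inrange_rev !lf_rev !Z.opp_involutive.
do 4?split => //.
do 4?split; rewrite /= ?O1 ?O2 ?O3 ?O4 //.
split.
- rewrite !ltgt_inv.
  case: (Nat.eq_dec n 1) => [En|En].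
  + subst n. rewrite -(proj1 (GX p H1 H2)) -(proj1 (GY q H3 H4)). exact: Et.
  + have Hm : (0 < n - 1 < n)%N by lia.
    have := Hi _ Hm. rewrite Nat2Z.inj_sub; last lia.
    have Ep : p + (Z.of_nat n - Z.of_nat 1) + 1 = p + Z.of_nat n by lia.
    have Eq : q + (Z.of_nat n - Z.of_nat 1) + 1 = q + Z.of_nat n by lia.
    have I1 : inrange X (p + (Z.of_nat n - Z.of_nat 1)) by apply: (inrange_conv H1 H2); lia.
    have I2 : inrange Y (q + (Z.of_nat n - Z.of_nat 1)) by apply: (inrange_conv H3 H4); lia.
    have C1 := GX _ I1; rewrite Ep in C1; have {}C1 := proj1 (C1 H2).
    have C2 := GY _ I2; rewrite Eq in C2; have {}C2 := proj1 (C2 H4).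
    by rewrite -C1 -C2 => ->.
- move=> m Hm; move/andP: Hm => [/ltP m1 /ltP m2].
  have Hm' : (0 < n - m < n)%N by lia.
  have := Hi _ Hm'; rewrite Nat2Z.inj_sub; last lia.
  have -> : - (- (p + Z.of_nat n) + Z.of_nat m) = p + (Z.of_nat n - Z.of_nat m) by lia.
  have -> : - (- (q + Z.of_nat n) + Z.of_nat m) = q + (Z.of_nat n - Z.of_nat m) by lia.
  by move=> ->.
Qed.

End Words.


Section Extreme.
Variables (V A : finType) (s t : A -> V) (r : rel A).
Hypothesis LG : locally_gentle s t r.
Variable S : word A -> Prop.
Hypothesis HSg : forall X, S X -> good s t r X.
Hypothesis HSk : forall X Y, S X -> S Y -> ~ kiss0 s t X Y.
Variable M : Z.
Hypothesis HSt : forall X, S X -> forall m, inrange X m -> inrange X (m+1)%Z ->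
  (lf X m).2 <> (lf X (m+1)%Z).2 -> (Z.abs m <= M)%Z.
Variable W : word A.
Hypothesis HW : S W.
Local Open Scope Z_scope.

Definition agree (Y : word A) sh x := inrange W x /\ inrange Y (x + sh) /\ lf Y (x + sh) = lf W x.
Definition div (Y : word A) sh x := inrange W x /\ inrange Y (x + sh) /\ lf Y (x + sh) <> lf W x.
Definition firstdiv (Y : word A) sh q x :=
  div Y sh x /\ (forall y, (q <= y < x \/ x < y <= q) -> agree Y sh y).
Definition bdiv (Y : word A) sh q b := exists x, firstdiv Y sh q x /\ (lf Y (x + sh)).2 = b.
Definition Ext q b := forall Y sh, S Y -> agree Y sh q -> ~ bdiv Y sh q b.

Lemma fd_orient Y sh q x : S Y -> agree Y sh q -> firstdiv Y sh q x ->
  (lf Y (x + sh)).2 <> (lf W x).2.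
Proof.
move=> SY Ag [[D1 [D2 D3]] Hb].
case: (Z.lt_trichotomy q x) => [Hlt|[Heq|Hgt]].
- have [A1 [A2 A3]] : agree Y sh (x-1) by apply: Hb; lia.
  have E1 : x - 1 + 1 = x by lia.
  have E2 : x - 1 + sh + 1 = x + sh by lia.
  move=> O; apply: (odiff_r LG (HSg HW) (HSg SY) (a := x-1) (c := x - 1 + sh)) => //.
  + by rewrite E1.
  + by rewrite E2.
  + by rewrite E1 E2 => E; apply: D3.
  + by rewrite E1 E2.
- by subst; case: Ag => _ [_ E]; case: D3.
- have [A1 [A2 A3]] : agree Y sh (x+1) by apply: Hb; lia.
  have E1 : x + 1 - 1 = x by lia.
  have E2 : x + 1 + sh - 1 = x + sh by lia.
  move=> O; apply: (odiff_l LG (HSg HW) (HSg SY) (a := x+1) (c := x + 1 + sh)) => //.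
  + by rewrite E1.
  + by rewrite E2.
  + by rewrite E1 E2 => E; apply: D3.
  + by rewrite E1 E2.
Qed.

Lemma NRD Y sh q : S Y -> agree Y sh q -> ~ (exists x, q < x /\ firstdiv Y sh q x) ->
  forall y, q <= y -> inrange W y -> agree Y sh y.
Proof.
move=> SY Ag N.
suff H : forall k : nat, forall y, q <= y <= q + Z.of_nat k -> inrange W y -> agree Y sh y.
  move=> y Hy Iy; apply: (H (Z.to_nat (y - q))) => //; lia.
elim=> [|k IH] y Hy Iy.
  by have -> : y = q by lia.
case: (Z.eq_dec y (q + Z.of_nat k.+1)) => [Ey|Ny]; last by apply: IH => //; lia.
have Iy1 : inrange W (y - 1) by apply: (inrange_conv (proj1 Ag) Iy); lia.
have [A1 [A2 A3]] : agree Y sh (y-1) by apply: IH => //; lia.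
have E1 : y - 1 + 1 = y by lia.
have E2 : y - 1 + sh + 1 = y + sh by lia.
have I2 : inrange Y (y + sh).
  rewrite -E2; apply: (sync_r (HSg HW) (HSg SY) A1 A2) => //; by rewrite E1.
split => //; split => //.
case: (eqVneq (lf Y (y + sh)) (lf W y)) => [//|D]; exfalso; apply: N.
exists y; split; first lia.
split; first by split => //; split => //; apply/eqP.
move=> z Hz; apply: IH; [lia|]. apply: (inrange_conv (proj1 Ag) Iy); lia.
Qed.

Lemma NLD Y sh q : S Y -> agree Y sh q -> ~ (exists x, x < q /\ firstdiv Y sh q x) ->
  forall y, y <= q -> inrange W y -> agree Y sh y.
Proof.
move=> SY Ag N.
suff H : forall k : nat, forall y, q - Z.of_nat k <= y <= q -> inrange W y -> agree Y sh y.
  move=> y Hy Iy; apply: (H (Z.to_nat (q - y))) => //; lia.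
elim=> [|k IH] y Hy Iy.
  by have -> : y = q by lia.
case: (Z.eq_dec y (q - Z.of_nat k.+1)) => [Ey|Ny]; last by apply: IH => //; lia.
have Iy1 : inrange W (y + 1) by apply: (inrange_conv Iy (proj1 Ag)); lia.
have [A1 [A2 A3]] : agree Y sh (y+1) by apply: IH => //; lia.
have E1 : y + 1 - 1 = y by lia.
have E2 : y + 1 + sh - 1 = y + sh by lia.
have I2 : inrange Y (y + sh).
  rewrite -E2; apply: (sync_l (HSg HW) (HSg SY) A1 A2) => //; by rewrite E1.
split => //; split => //.
case: (eqVneq (lf Y (y + sh)) (lf W y)) => [//|D]; exfalso; apply: N.
exists y; split; first lia.
split; first by split => //; split => //; apply/eqP.
move=> z Hz; apply: IH; [lia|]. apply: (inrange_conv Iy (proj1 Ag)); lia.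
Qed.

Lemma fd_uniq_r Y sh q x1 x2 : q < x1 -> q < x2 -> firstdiv Y sh q x1 -> firstdiv Y sh q x2 -> x1 = x2.
Proof.
move=> H1 H2 [[_ [_ D1]] A1] [[_ [_ D2]] A2].
case: (Z.lt_trichotomy x1 x2) => [Hl|[//|Hg]].
- by case: (A2 x1 (or_introl (conj (Z.lt_le_incl _ _ H1) Hl))) => _ [_].
- by case: (A1 x2 (or_introl (conj (Z.lt_le_incl _ _ H2) Hg))) => _ [_].
Qed.

Lemma CK Y sh q x x' : S Y -> agree Y sh q -> x < q -> q < x' ->
  firstdiv Y sh q x -> firstdiv Y sh q x' ->
  (lf Y (x + sh)).2 <> (lf Y (x' + sh)).2 -> False.
Proof.
move=> SY Ag Hx Hx' F1 F2 O.
have O1 := fd_orient SY Ag F1.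
have O2 := fd_orient SY Ag F2.
case: F1 => [[D1 [D2 D3]] B1]; case: F2 => [[D1' [D2' D3']] B2].
have Ag1 : agree Y sh (x+1) by apply: B1; lia.
case: Ag1 => [A1 [A2 A3]].
have [GW1 _] := HSg HW; have [GY1 _] := HSg SY.
have E1 : x + sh + 1 = x + 1 + sh by lia.
have K := GK (s := s) (t := t) (X := Y) (Y := W) (p := x + sh) (q := x) (n := x' - x)
               (c := (lf Y (x + sh)).2) (ltac:(lia)) D2.
have E2 : x + sh + (x' - x) = x' + sh by lia.
have E3 : x + (x' - x) = x' by lia.
rewrite E2 E3 in K.
have P1 : (lf Y (x' + sh)).2 = ~~ (lf Y (x + sh)).2.
  by move: O; case: (lf Y (x + sh)).2; case: (lf Y (x' + sh)).2.
have P2 : (lf W x).2 = ~~ (lf Y (x + sh)).2.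
  by move: O1; case: (lf Y (x + sh)).2; case: (lf W x).2.
have P3 : (lf W x').2 = (lf Y (x + sh)).2.
  by move: O O2; case: (lf Y (x + sh)).2; case: (lf Y (x' + sh)).2; case: (lf W x').2.
have P4 : ltgt s t (lf Y (x + sh)) = ltgt s t (lf W x).
  have A2' : inrange Y (x + sh + 1) by rewrite E1.
  have C1 := proj1 (GY1 _ D2 A2').
  have C2 := proj1 (GW1 _ D1 A1).
  by rewrite C1 C2 E1 A3.
have P5 : forall m, 0 < m < x' - x -> lf Y (x + sh + m) = lf W (x + m).
  move=> m Hm; have [_ [_ Am]] : agree Y sh (x + m).
    by case: (Z_le_gt_dec (x + m) q) => h; [apply: B1 | apply: B2]; lia.
  by rewrite -Am; congr (lf Y _); lia.
case: (K D2' D1 D1' erefl P1 P2 P3 P4 P5) => K'.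
- exact: (HSk SY HW K').
- exact: (HSk HW SY K').
Qed.

Lemma neq_negb (x y : bool) : x <> y -> y = ~~ x.
Proof. by case: x; case: y. Qed.

Definition Good b l := exists Y sh, S Y /\ inrange W l /\
  (forall y, l <= y -> inrange W y -> agree Y sh y) /\ div Y sh (l-1) /\ (lf Y (l - 1 + sh)).2 = b.

Lemma Good_orient l Y sh : S Y -> inrange W l ->
  (forall y, l <= y -> inrange W y -> agree Y sh y) -> div Y sh (l-1) ->
  (lf Y (l - 1 + sh)).2 <> (lf W (l - 1)).2.
Proof.
move=> SY Il Au D.
apply: (fd_orient SY (q := l) (Au l (Z.le_refl _) Il)).
split => // y Hy; have -> : y = l by lia. by apply: Au => //; lia.
Qed.

Lemma step b l : (forall q, inrange W q -> exists Y sh, S Y /\ agree Y sh q /\ bdiv Y sh q b) ->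
  Good b l -> exists l', l' < l /\ Good b l'.
Proof.
move=> Hn [Y [sh [SY [Il [Au [[D1 [D2 D3]] Ob]]]]]].
have Ou := Good_orient SY Il Au (conj D1 (conj D2 D3)).
have [Y' [sh' [SY' [Ag' [xv [Fv Ov]]]]]] := Hn (l-1) D1.
have [GY _] := HSg SY; have [GW _] := HSg HW.
case: (classic (exists x', l-1 < x' /\ firstdiv Y' sh' (l-1) x')) => [[x' [Hx' Fx']]|NR].
- exfalso.
  case: (eqVneq (lf Y' (x' + sh')).2 b) => Ob'.
  + have Ox' := fd_orient SY' Ag' Fx'.
    have [[Dx1 [Dx2 Dx3]] Bx] := Fx'.
    have [Ax1 [Ax2 Ax3]] : agree Y sh x' by apply: Au => //; lia.
    have [Al1 [Al2 Al3]] : agree Y sh l by apply: Au => //; lia.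
    have [Ag1 [Ag2 Ag3]] := Ag'.
    have K := GK (s := s) (t := t) (X := Y) (Y := Y') (p := l - 1 + sh) (q := l - 1 + sh')
                 (n := x' - (l - 1)) (c := b) (ltac:(lia)) D2.
    have E1 : l - 1 + sh + (x' - (l - 1)) = x' + sh by lia.
    have E2 : l - 1 + sh' + (x' - (l - 1)) = x' + sh' by lia.
    rewrite E1 E2 in K.
    have P1 : (lf Y (x' + sh)).2 = ~~ b.
      by rewrite Ax3 -Ob'; apply: neq_negb.
    have P2 : (lf Y' (l - 1 + sh')).2 = ~~ b.
      by rewrite Ag3 -Ob; apply: neq_negb.
    have P4 : ltgt s t (lf Y (l - 1 + sh)) = ltgt s t (lf Y' (l - 1 + sh')).
      have E3 : l - 1 + sh + 1 = l + sh by lia.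
      have Al2' : inrange Y (l - 1 + sh + 1) by rewrite E3.
      have C1 := proj1 (GY _ D2 Al2').
      have Il' : inrange W (l - 1 + 1) by rewrite Z.sub_add.
      have C2 := proj1 (GW _ D1 Il').
      by rewrite C1 Ag3 C2 E3 Al3 Z.sub_add.
    have P5 : forall m, 0 < m < x' - (l - 1) -> lf Y (l - 1 + sh + m) = lf Y' (l - 1 + sh' + m).
      move=> m Hm.
      have Im : inrange W (l - 1 + m) by apply: (inrange_conv D1 Dx1); lia.
      have [_ [_ Am]] : agree Y sh (l - 1 + m) by apply: Au => //; lia.
      have [_ [_ Bm]] : agree Y' sh' (l - 1 + m) by apply: Bx; lia.
      have -> : l - 1 + sh + m = l - 1 + m + sh by lia.
      have -> : l - 1 + sh' + m = l - 1 + m + sh' by lia.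
      by rewrite Am Bm.
    case: (K Ax2 Ag2 Dx2 Ob P1 P2 Ob' P4 P5) => K'.
    * exact: (HSk SY SY' K').
    * exact: (HSk SY' SY K').
  + case: (Z.lt_trichotomy xv (l-1)) => [Hlt|[Heq|Hgt]].
    * apply: (CK SY' Ag' Hlt Hx' Fv Fx'); by rewrite Ov; apply/nesym/eqP.
    * by subst xv; case: Fv => [[_ [_ Dv]] _]; case: Ag' => _ [_ Ev]; apply: Dv.
    * have Ex := fd_uniq_r Hgt Hx' Fv Fx'; subst xv.
      by move: Ob'; rewrite Ov eqxx.
- have Au' := NRD SY' Ag' NR.
  case: (Z.lt_trichotomy xv (l-1)) => [Hlt|[Heq|Hgt]]; last first.
  + by exfalso; apply: NR; exists xv.
  + by subst xv; case: Fv => [[_ [_ Dv]] _]; case: Ag' => _ [_ Ev]; exfalso; apply: Dv.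
  exists (xv + 1); split; first lia.
  case: Fv => [[Dv1 [Dv2 Dv3]] Bv].
  exists Y', sh'; split => //; split.
    by apply: (inrange_conv Dv1 D1); lia.
  split.
    move=> y Hy Iy; case: (Z_le_gt_dec y (l-1)) => h.
    * by apply: Bv; lia.
    * by apply: Au' => //; lia.
  have -> : xv + 1 - 1 = xv by lia.
  by split.
Qed.

Lemma bound b t0 : inrange W t0 -> inrange W (t0+1) -> (lf W t0).2 <> (lf W (t0+1)).2 ->
  ends_cyclic W -> exists B, forall l, Good b l -> B <= l.
Proof.
move=> It0 It1 Ot Hc.
case E: (lo W) => [l0|].
  exists (l0 + 2) => l [Y [sh [_ [_ [_ [[D1 _] _]]]]]].
  by move: D1; rewrite /inrange E; lia.
case: Hc => _ /(_ E) [K [p [eps [Hp HK]]]].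
exists (Z.min (K+1) (t0 + 1 - 2*M)).
move=> l [Y [sh [SY [Il [Au [D Ob]]]]]].
case: (Z_le_gt_dec l K) => hl; last lia.
have Ou := Good_orient SY Il Au D.
case: D => [D1 [D2 D3]].
have [Al1 [Al2 Al3]] : agree Y sh l by apply: Au => //; lia.
have E1 : l - 1 + sh + 1 = l + sh by lia.
have T1 : Z.abs (l - 1 + sh) <= M.
  apply: (HSt SY D2); first by rewrite E1.
  rewrite E1 Al3 (proj2 (HK l hl)) -(proj2 (HK (l-1) ltac:(lia))).
  exact: Ou.
have Ht0 : K <= t0.
  case: (Z_le_gt_dec K t0) => // h; exfalso; apply: Ot.
  by rewrite (proj2 (HK t0 ltac:(lia))) (proj2 (HK (t0+1) ltac:(lia))).
have [A1 [A2 A3]] : agree Y sh t0 by apply: Au => //; lia.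
have [B1 [B2 B3]] : agree Y sh (t0+1) by apply: Au => //; lia.
have E2 : t0 + sh + 1 = t0 + 1 + sh by lia.
have T2 : Z.abs (t0 + sh) <= M.
  apply: (HSt SY A2); first by rewrite E2.
  by rewrite E2 A3 B3.
lia.
Qed.

Lemma descent b : (exists l, Good b l) -> (forall l, Good b l -> exists l', l' < l /\ Good b l') ->
  (exists B, forall l, Good b l -> B <= l) -> False.
Proof.
move=> [l Gl] St [B HB].
suff H : forall k : nat, forall l, (Z.to_nat (l - B) <= k)%coq_nat -> ~ Good b l.
  exact: (H _ l (le_n _) Gl).
elim=> [|k IH] l' Hk G.
  have [l'' [Hl G']] := St _ G.
  have := HB _ G'; have := HB _ G; lia.
have [l'' [Hl G']] := St _ G.
have := HB _ G'; have := HB _ G => h1 h2.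
apply: (IH l'' _ G'); lia.
Qed.

Lemma straight_ext p0 : inrange W p0 ->
  ~ (exists t0, inrange W t0 /\ inrange W (t0+1) /\ (lf W t0).2 <> (lf W (t0+1)).2) ->
  Ext p0 (lf W p0).2.
Proof.
move=> Ip0 NS.
have Same : forall x, inrange W x -> (lf W x).2 = (lf W p0).2.
  have St : forall m, inrange W m -> inrange W (m+1) -> (lf W m).2 = (lf W (m+1)).2.
    move=> m I1 I2; apply: NNPP => N; apply: NS; by exists m.
  suff H : forall k : nat, (inrange W (p0 + Z.of_nat k) -> (lf W (p0 + Z.of_nat k)).2 = (lf W p0).2) /\
                          (inrange W (p0 - Z.of_nat k) -> (lf W (p0 - Z.of_nat k)).2 = (lf W p0).2).
    move=> x Ix; case: (Z_le_gt_dec p0 x) => h.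
    - have := proj1 (H (Z.to_nat (x - p0))); have -> : p0 + Z.of_nat (Z.to_nat (x - p0)) = x by lia.
      by apply.
    - have := proj2 (H (Z.to_nat (p0 - x))); have -> : p0 - Z.of_nat (Z.to_nat (p0 - x)) = x by lia.
      by apply.
  elim=> [|k [IH1 IH2]]; first by rewrite Z.add_0_r Z.sub_0_r.
  split => I.
  - have I' : inrange W (p0 + Z.of_nat k) by apply: (inrange_conv Ip0 I); lia.
    rewrite -(IH1 I'); symmetry.
    have E : p0 + Z.of_nat k.+1 = p0 + Z.of_nat k + 1 by lia.
    rewrite E; apply: St => //; by rewrite -E.
  - have I' : inrange W (p0 - Z.of_nat k) by apply: (inrange_conv I Ip0); lia.
    rewrite -(IH2 I').
    have E : p0 - Z.of_nat k = p0 - Z.of_nat k.+1 + 1 by lia.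
    rewrite E; apply: St => //; by rewrite -E.
move=> Y sh SY Ag [x [Fx Ox]].
apply: (fd_orient SY Ag Fx); rewrite Ox Same //.
by case: Fx => [[]].
Qed.

Lemma extreme : (exists p0, inrange W p0) -> ends_cyclic W ->
  exists q b, inrange W q /\ Ext q b.
Proof.
move=> [p0 Ip0] Hc; apply: NNPP => Hne.
have H : forall q b, inrange W q -> exists Y sh, S Y /\ agree Y sh q /\ bdiv Y sh q b.
  move=> q b Iq; apply: NNPP => Hn1; apply: Hne; exists q, b; split => // Y sh SY Ag Bd.
  by apply: Hn1; exists Y, sh.
case: (classic (exists t0, inrange W t0 /\ inrange W (t0+1) /\ (lf W t0).2 <> (lf W (t0+1)).2))
  => [[t0 [It0 [It1 Ot]]] | NS]; last first.
  by apply: Hne; exists p0, (lf W p0).2; split => //; apply: straight_ext.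
have [b [l Gl]] : exists b l, Good b l.
  case E: (hi W) => [h|].
  - exists false.
    have Iq0 : inrange W (h - 1).
      by move: Ip0; rewrite /inrange E; case: (lo W) => [?|]; lia.
    have [Y [sh [SY [Ag [x [Fx Ox]]]]]] := H (h-1) false Iq0.
    have Hx : x < h - 1.
      case: (Z.lt_trichotomy x (h-1)) => [//|[Heq|Hgt]].
      + by subst x; case: Fx => [[_ [_ Dv]] _]; case: Ag => _ [_ Ev].
      + by case: Fx => [[D1 _] _]; move: D1; rewrite /inrange E; lia.
    have Au := NRD SY Ag.
    case: Fx => [[D1 [D2 D3]] Bx].
    exists (x + 1), Y, sh; split => //; split.
      by apply: (inrange_conv D1 Iq0); lia.
    split.
      move=> y Hy Iy; case: (Z_le_gt_dec y (h-1)) => hy.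
      + by apply: Bx; lia.
      + by move: Iy; rewrite /inrange E; lia.
    have -> : x + 1 - 1 = x by lia.
    by split.
  - case: Hc => /(_ E) [K [p [eps [Hp HK]]]] _.
    exists eps.
    have Iq0 : inrange W (Z.max K p0).
      by move: Ip0; rewrite /inrange E; case: (lo W) => [?|]; lia.
    have [Y [sh [SY [Ag [x [Fx Ox]]]]]] := H _ eps Iq0.
    have Hx : x < Z.max K p0.
      case: (Z.lt_trichotomy x (Z.max K p0)) => [//|[Heq|Hgt]].
      + by subst x; case: Fx => [[_ [_ Dv]] _]; case: Ag => _ [_ Ev].
      + exfalso; apply: (fd_orient SY Ag Fx); rewrite Ox (proj2 (HK x _)) //; lia.
    have NR : ~ (exists x', Z.max K p0 < x' /\ firstdiv Y sh (Z.max K p0) x').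
      move=> [x' [Hx' Fx']].
      apply: (CK SY Ag Hx Hx' Fx Fx').
      rewrite Ox.
      have O' := fd_orient SY Ag Fx'.
      rewrite (proj2 (HK x' ltac:(lia))) in O'.
      by apply: nesym.
    have Au := NRD SY Ag NR.
    case: Fx => [[D1 [D2 D3]] Bx].
    exists (x + 1), Y, sh; split => //; split.
      by apply: (inrange_conv D1 Iq0); lia.
    split.
      move=> y Hy Iy; case: (Z_le_gt_dec y (Z.max K p0)) => hy.
      + by apply: Bx; lia.
      + by apply: Au => //; lia.
    have -> : x + 1 - 1 = x by lia.
    by split.
have [B HB] := bound b It0 It1 Ot Hc.
apply: (descent (ex_intro _ l Gl) _ (ex_intro _ B HB)).
move=> l' G'; apply: step => //; move=> q Iq; exact: H.
Qed.

End Extreme.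


Lemma inrange_shift (A : Type) (w : word A) k p : inrange (shift_word w k) p <-> inrange w (p - k).
Proof. rewrite /inrange /shift_word /=; case: (lo w) => [?|]; case: (hi w) => [?|] /=; lia. Qed.

Section Inj.
Variables (V A : finType) (s t : A -> V) (r : rel A).
Hypothesis LG : locally_gentle s t r.
Variable S : word A -> Prop.
Hypothesis HSg : forall X, S X -> good s t r X.
Hypothesis HSk : forall X Y, S X -> S Y -> ~ kiss0 s t X Y.
Local Open Scope Z_scope.

Lemma inj_core Wi Wj qi qj b : S Wi -> S Wj -> inrange Wi qi -> inrange Wj qj ->
  lf Wi qi = lf Wj qj -> Ext S Wi qi b -> Ext S Wj qj b ->
  exists k, same_word (shift_word Wi k) Wj.
Proof.
move=> Si Sj Ii Ij El Exi Exj.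
set sh := qj - qi.
have Esh : qi + sh = qj by rewrite /sh; lia.
have Ag : agree Wi Wj sh qi by split => //; rewrite Esh.
have Esh' : qj + - sh = qi by rewrite /sh; lia.
have Ag' : agree Wj Wi (-sh) qj by split => //; rewrite Esh'.
have NoDiv : forall x, firstdiv Wi Wj sh qi x -> False.
  move=> x Fx; have O := fd_orient LG HSg Si Sj Ag Fx.
  case: (eqVneq (lf Wj (x + sh)).2 b) => Ob.
  - by apply: (Exi Wj sh Sj Ag); exists x; split.
  - apply: (Exj Wi (-sh) Si Ag'); exists (x + sh).
    have Ex : x + sh + - sh = x by lia.
    case: Fx => [[D1 [D2 D3]] B].
    split; last first.
      have bl : forall x y z : bool, x <> y -> x != z -> y = z by do 3!case.
      rewrite Ex; exact: bl _ _ _ O Ob.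
    split.
      split => //; rewrite Ex; split => //; by apply: nesym.
    move=> y Hy; have [A1 [A2 A3]] : agree Wi Wj sh (y - sh) by apply: B; lia.
    have Ey : y - sh + sh = y by lia.
    rewrite Ey in A2 A3.
    have Ey' : y + - sh = y - sh by lia.
    by split => //; rewrite Ey'.
have Aall : forall y, inrange Wi y -> agree Wi Wj sh y.
  move=> y Iy; case: (Z_le_gt_dec qi y) => h.
  - apply: (NRD HSg Si Sj Ag) => // [[x [_ Fx]]]; exact: NoDiv Fx.
  - apply: (NLD HSg Si Sj Ag) => // [[x [_ Fx]]|]; [exact: NoDiv Fx | lia].
exists sh; split; [|split].
- rewrite /shift_word /=.
  case E: (lo Wi) => [l0|] /=.
  + have I1 : inrange Wi (l0 + 1) by move: Ii; rewrite /inrange E; case: (hi Wi) => [?|]; lia.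
    have [A1 [A2 A3]] := Aall _ I1.
    have N0 : ~ inrange Wj (l0 + 1 + sh - 1).
      move=> I0; have := sync_l (HSg Sj) (HSg Si) A2 A1 A3 I0.
      by rewrite /inrange E Z.add_simpl_r; lia.
    move: A2 N0; rewrite /inrange; case: (lo Wj) => [l'|]; case: (hi Wj) => [h'|] /=;
      try (move=> *; exfalso; lia); move=> *; congr Some; lia.
  + case E': (lo Wj) => [l'|] //; exfalso.
    case: (Z_le_gt_dec (l' - sh) qi) => h.
    * have Iy : inrange Wi (l' - sh) by move: Ii; rewrite /inrange E; case: (hi Wi) => [?|]; lia.
      have [_ [A2 _]] := Aall _ Iy; move: A2; rewrite /inrange E'; have -> : l' - sh + sh = l' by lia.
      lia.
    * by move: Ij; rewrite /inrange E'; lia.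
- rewrite /shift_word /=.
  case E: (hi Wi) => [h0|] /=.
  + have I1 : inrange Wi (h0 - 1) by move: Ii; rewrite /inrange E; case: (lo Wi) => [?|]; lia.
    have [A1 [A2 A3]] := Aall _ I1.
    have N0 : ~ inrange Wj (h0 - 1 + sh + 1).
      move=> I0; have := sync_r (HSg Sj) (HSg Si) A2 A1 A3 I0.
      by rewrite /inrange E Z.sub_add; lia.
    move: A2 N0; rewrite /inrange; case: (lo Wj) => [l'|]; case: (hi Wj) => [h'|] /=;
      try (move=> *; exfalso; lia); move=> *; congr Some; lia.
  + case E': (hi Wj) => [h'|] //; exfalso.
    case: (Z_le_gt_dec qi (h' - sh)) => h.
    * have Iy : inrange Wi (h' - sh) by move: Ii; rewrite /inrange E; case: (lo Wi) => [?|]; lia.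
      have [_ [A2 _]] := Aall _ Iy; move: A2; rewrite /inrange E'; have -> : h' - sh + sh = h' by lia.
      lia.
    * by move: Ij; rewrite /inrange E'; lia.
- move=> p /inrange_shift Ip; rewrite /shift_word /=.
  have [_ [_ A3]] := Aall _ Ip; move: A3; have -> : p - sh + sh = p by lia.
  by move=> ->.
Qed.

End Inj.


Lemma card_cover (V V' A : finType) (f g : A -> V') (h : V -> V') :
  (forall a, exists v, f a = h v \/ g a = h v) ->
  (forall v, #|[set a | f a == h v]| <= 2 /\ #|[set a | g a == h v]| <= 2) ->
  #|A| <= 4 * #|V|.
Proof.
move=> Hc H.
have E : forall P : pred A, \sum_(a : A) (P a : nat) = #|[set a | P a]|.
  move=> P; rewrite -sum1dep_card [RHS]big_mkcond; apply: eq_bigr => a _; by case: (P a).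
apply: (@leq_trans (\sum_(a : A) \sum_(v : V) ((f a == h v) + (g a == h v)))).
  rewrite -sum1_card; apply: leq_sum => a _.
  have [v Hv] := Hc a.
  rewrite (bigD1 v) //=; apply: leq_trans (leq_addr _ _).
  by case: Hv => ->; rewrite eqxx // addnC.
rewrite exchange_big /= -sum1_card big_distrr /=; apply: leq_sum => v _.
rewrite big_split /= !E muln1.
by case: (H v) => h1 h2; rewrite -[4]/(2+2); apply: leq_add.
Qed.

Lemma unif (I : finType) (P : I -> Z -> Prop) :
  (forall i m m', P i m -> (m <= m')%Z -> P i m') -> (forall i, exists m, P i m) ->
  exists m, forall i, P i m.
Proof.
move=> Mon H.
suff : forall l : seq I, exists m, forall i, i \in l -> P i m.
  move=> /(_ (enum I)) [m Hm]; exists m => i; apply: Hm; by rewrite mem_enum.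
elim=> [|a l [m IH]]; first by exists 0%Z.
have [ma Ha] := H a.
exists (Z.max m ma) => i; rewrite inE => /orP [/eqP -> | Hi].
- apply: Mon Ha _; lia.
- apply: Mon (IH i Hi) _; lia.
Qed.

Local Open Scope Z_scope.

Lemma turn_bound (A : finType) (w : word A) : ends_cyclic w -> exists M, forall m, inrange w m ->
  inrange w (m+1) -> (lf w m).2 <> (lf w (m+1)).2 -> Z.abs m <= M.
Proof.
move=> [Hh Hl].
have [L HL] : exists L, forall m, inrange w m -> inrange w (m+1) -> (lf w m).2 <> (lf w (m+1)).2 -> L <= m.
  case E: (lo w) => [l0|].
  - by exists l0 => m; rewrite /inrange E; lia.
  - have [K [p [eps [_ HK]]]] := Hl E.
    exists K => m _ _ T; case: (Z_le_gt_dec K m) => // h; exfalso; apply: T.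
    by rewrite (proj2 (HK m ltac:(lia))) (proj2 (HK (m+1) ltac:(lia))).
have [R HR] : exists R, forall m, inrange w m -> inrange w (m+1) -> (lf w m).2 <> (lf w (m+1)).2 -> m <= R.
  case E: (hi w) => [h0|].
  - by exists h0 => m; rewrite /inrange E; case: (lo w) => [?|]; lia.
  - have [K [p [eps [_ HK]]]] := Hh E.
    exists K => m _ _ T; case: (Z_le_gt_dec m K) => // h; exfalso; apply: T.
    by rewrite (proj2 (HK m ltac:(lia))) (proj2 (HK (m+1) ltac:(lia))).
exists (Z.max (Z.abs L) (Z.abs R)) => m I1 I2 T.
have := HL m I1 I2 T; have := HR m I1 I2 T; lia.
Qed.

Lemma turn_bound_rev (A : finType) (w : word A) M : (forall m, inrange w m ->
  inrange w (m+1) -> (lf w m).2 <> (lf w (m+1)).2 -> Z.abs m <= M) ->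
  forall m, inrange (rev_word w) m ->
  inrange (rev_word w) (m+1) -> (lf (rev_word w) m).2 <> (lf (rev_word w) (m+1)).2 -> Z.abs m <= M + 1.
Proof.
move=> H m /inrange_rev I1 /inrange_rev I2; rewrite !lf_rev /inv /= => T.
have E : - (m + 1) + 1 = - m by lia.
have := H (- (m+1)) I2; rewrite E => /(_ I1) H'.
have : Z.abs (- (m + 1)) <= M by apply: H' => E'; apply: T; rewrite E'.
lia.
Qed.



Theorem lemma5p11 (V A : finType) (s t : A -> V) (r : rel A) :
  locally_gentle s t r ->
  exists N : nat,
    forall (V' A' : finType) (s' t' : A' -> V') (r' : rel A')
           (iv : V -> V') (ia : A -> A'),
      is_blossoming s t r s' t' r' iv ia ->
      forall (n : nat) (ws : 'I_n -> word A'),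
        (forall i, is_walk s' t' r' (ws i)) ->
        (forall i j, i != j -> ~ walk_equiv (ws i) (ws j)) ->
        (forall i j, ~ kisses s' t' (ws i) (ws j)) ->
        (n <= N)%N.
Proof.
move=> _; exists (16 * #|V|)%N.
move=> V' A' s' t' r' iv ia HB n ws Hw Hneq Hnk.
have [_ [_ [Hia [_ [LG' [Hdeg [_ Hnew]]]]]]] := HB.
pose S := fun X : word A' => exists i, X = ws i \/ X = rev_word (ws i).
have Gw : forall i, good s' t' r' (ws i).
  move=> i; have [[_ H1] [H2 _]] := Hw i; split => //.
have HSg : forall X, S X -> good s' t' r' X.
  by move=> X [i [->|->]]; [|apply: good_rev].
have HSk : forall X Y, S X -> S Y -> ~ kiss0 s' t' X Y.
  move=> X Y [i [->|->]] [j [->|->]] K.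
  - by apply: (Hnk i j); left.
  - by apply: (Hnk i j); right.
  - have := kiss_rev (good_rev (Gw i)) (Gw j) K; rewrite rev_rev => K'.
    by apply: (Hnk i j); right.
  - have := kiss_rev (good_rev (Gw i)) (good_rev (Gw j)) K; rewrite !rev_rev => K'.
    by apply: (Hnk i j); left.
have [M HM] : exists M, forall i : 'I_n, forall m, inrange (ws i) m ->
    inrange (ws i) (m+1) -> (lf (ws i) m).2 <> (lf (ws i) (m+1)).2 -> Z.abs m <= M.
  apply: unif.
  - move=> i m m' H Hm x I1 I2 T; have := H x I1 I2 T; lia.
  - move=> i; apply: turn_bound; by case: (Hw i) => _ [].
have HSt : forall X, S X -> forall m, inrange X m -> inrange X (m+1) ->
    (lf X m).2 <> (lf X (m+1)).2 -> Z.abs m <= M + 1.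
  move=> X [i [->|->]] m I1 I2 T.
  - have := HM i m I1 I2 T; lia.
  - exact: (turn_bound_rev (HM i)).
have Hex : forall i, exists p : (A' * bool) * bool,
    exists q, inrange (ws i) q /\ Ext S (ws i) q p.2 /\ lf (ws i) q = p.1.
  move=> i.
  have Si : S (ws i) by exists i; left.
  have [[Hp _] [_ Hc]] := Hw i.
  have [q [b [Iq Ex]]] := extreme LG' HSg HSk HSt Si Hp Hc.
  by exists (lf (ws i) q, b), q.
pose g := fun i => proj1_sig (constructive_indefinite_description _ (Hex i)).
have Hg : forall i, exists q, inrange (ws i) q /\ Ext S (ws i) q (g i).2 /\ lf (ws i) q = (g i).1.
  move=> i; rewrite /g; exact: proj2_sig (constructive_indefinite_description _ (Hex i)).
have ginj : injective g.
  move=> i j E; apply/eqP; apply: contraT => Nij.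
  have [qi [Ii [Ei Li]]] := Hg i.
  have [qj [Ij [Ej Lj]]] := Hg j.
  rewrite E in Ei Li.
  have Si : S (ws i) by exists i; left.
  have Sj : S (ws j) by exists j; left.
  have [k Hk] := inj_core LG' HSg Si Sj Ii Ij (etrans Li (esym Lj)) Ei Ej.
  by exfalso; apply: (Hneq i j Nij); exists k; left.
have := @leq_card _ _ g ginj.
rewrite card_ord !card_prod card_bool => Hn.
apply: (leq_trans Hn).
have HA : (#|A'| <= 4 * #|V|)%N.
  apply: (card_cover (f := t') (g := s') (h := iv)).
  - move=> a; case: (boolP (a \in codom ia)) => [/codomP [a0 ->]|Na].
    + exists (t a0); left; by case: (Hia a0).
    + have := Hnew a Na.
      case: (boolP (s' a \in codom iv)) => [/codomP [v ->] _|_ Ht].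
      * by exists v; right.
      * have Ht' : t' a \in codom iv by move: Ht; case: (t' a \in codom iv).
        by move/codomP: Ht' => [v ->]; exists v; left.
  - by move=> v; have [h1 h2] := Hdeg v; rewrite h1 h2.
move: HA; clear; lia.
Qed.
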